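(* Let $G$ be a simple 2-connected plane graph whose unbounded face $p_\infty$ has $V_\infty$ vertices. Let $(a,b)$ be an admissible state such that (1) $b_v=b_{v'}=1$ for some edge $vv'$ on the boundary of $p_\infty$; (2) $a_p+b_p=0$ for every bounded face $p$; (3) $(b_{v_1}-b_p)(b_{v_2}-b_p)=0$ for every bounded face $p$ and every edge $v_1v_2$ on the boundary of $p$. Then $b_w\ge1$ for every vertex $w$, $a_p=-1$ for every bounded face $p$, and $B(a,b)\ge 2+V_\infty$.
   Context: A simple 2-connected plane graph $G$ is a simple 2-connected planar graph with a fixed embedding in the plane, so every face is bounded by a cycle. For a face $p$, $l(p)$ is the number of edges on its boundary and $v\in p$ means $v$ lies on the boundary of $p$. An admissible state $(a,b)$ assigns an integer $a_p$ to each bounded face $p$ and an integer $b_v$ to each vertex $v$ such that $a_p+b_v\ge 0$ whenever $p$ is bounded and $v\in p$, and $b_v\ge0$ for every vertex $v$ on $p_\infty$. For a bounded face $p$, $b_p=\min_{v\in p}b_v$. $B(a,b)=2\sum_{v}b_v+\sum_p (l(p)-2)a_p$, with $p$ over bounded faces and $v$ over all vertices. *)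

(* Defs.v *)
(* Plane graphs encoded combinatorially by rotation systems. *)
From HB Require Import structures.
From mathcomp Require Import all_boot all_order all_algebra.
Set Implicit Arguments. Unset Strict Implicit. Unset Printing Implicit Defensive.
Import Order.TTheory GRing.Theory Num.Theory.

Section PlaneGraph.
Variables (V : finType) (adj : rel V) (rot : V -> V -> V).

Definition darts : {set V * V} := [set d | adj d.1 d.2].

(* face-tracing permutation: after traversing (u,v), turn at v:
   next dart is (v, rot v u), where rot v is the cyclic order around v *)
Definition fnext (d : V * V) : V * V := (d.2, rot d.2 d.1).

(* the face (boundary walk) containing dart d, as its set of darts *)
Definition face_of (d : V * V) : {set V * V} := [set d' | fconnect fnext d d'].

Definition faces : {set {set V * V}} := [set face_of d | d in darts].

Definition face_vertices (p : {set V * V}) : {set V} := [set d.1 | d in p].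

Definition face_edges (p : {set V * V}) : {set {set V}} := [set [set d.1; d.2] | d in p].
Definition face_length (p : {set V * V}) : nat := #|face_edges p|.

Definition rotation_system : Prop :=
  [/\ symmetric adj, irreflexive adj,
      (forall v u, adj v u -> adj v (rot v u)),
      (forall v, {in [pred u | adj v u] &, injective (rot v)}) &
      (forall v u w, adj v u -> adj v w -> fconnect (rot v) u w)].

Definition two_connected : Prop :=
  [/\ 2 < #|V|,
      (forall u v, connect adj u v) &
      (forall x u v, u != x -> v != x ->
         connect [rel y z | [&& adj y z, y != x & z != x]] u v)].

(* genus 0 (Euler's formula V - E + F = 2, E = #darts / 2) *)
Definition genus0 : Prop := #|V| + #|faces| = (#|darts| %/ 2) + 2.

Definition plane_graph (pinf : {set V * V}) : Prop :=
  [/\ rotation_system, two_connected, genus0 & pinf \in faces].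

Definition bounded_faces (pinf : {set V * V}) : {set {set V * V}} := faces :\ pinf.

Local Open Scope ring_scope.

Definition admissible (pinf : {set V * V}) (a : {set V * V} -> int) (b : V -> int) : Prop :=
  (forall p, p \in bounded_faces pinf -> forall v, v \in face_vertices p -> 0 <= a p + b v)
  /\ (forall v, v \in face_vertices pinf -> 0 <= b v).

Definition bface (b : V -> int) (p : {set V * V}) : int :=
  match [pick v in face_vertices p] with
  | Some v0 => \big[Num.min/b v0]_(v in face_vertices p) b v
  | None => 0
  end.

Definition Bval (pinf : {set V * V}) (a : {set V * V} -> int) (b : V -> int) : int :=
  2 * (\sum_(v : V) b v)
  + \sum_(p in bounded_faces pinf) ((face_length p)%:Z - 2) * a p.

End PlaneGraph.

(* Main.v *)
Require Import Defs.
From HB Require Import structures.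
From mathcomp Require Import all_boot all_order all_algebra.
From mathcomp Require Import all_fingroup zify.
Import Order.TTheory GRing.Theory Num.Theory.
Set Implicit Arguments. Unset Strict Implicit. Unset Printing Implicit Defensive.

Lemma connect_ind' (T : finType) (r : rel T) (P : T -> Prop) x :
  P x -> (forall u v, P u -> r u v -> P v) -> forall y, connect r x y -> P y.
Proof.
move=> Px IH y /connectP [p pth ->]; elim: p x Px pth => //= z p IHp x Px.
by case/andP=> rxz pth; apply: IHp (IH _ _ Px rxz) pth.
Qed.

Section Genus.
Variable T : finType.
Local Open Scope group_scope.
Implicit Types s t : {perm T}.

Definition gr s t : rel T :=
  fun x y => [|| y == s x, x == s y, y == t x | x == t y].

Lemma gr_sym s t : symmetric (gr s t).
Proof. by move=> x y; rewrite /gr; apply/idP/idP => /or4P [] /eqP ->; rewrite eqxx ?orbT. Qed.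

Lemma porbitS s z : porbit s (s z) = porbit s z.
Proof. by have := porbit_perm s 1 z; rewrite expg1. Qed.

Lemma porbit_gr s t x y : y \in porbit s x -> connect (gr s t) x y.
Proof.
case/porbitP=> i ->; elim: i => [|i IH]; first by rewrite expg0 perm1 connect0.
apply: (connect_trans IH); apply: connect1; by rewrite /gr expgSr permM eqxx.
Qed.

Lemma porbitM_gr s t x y : y \in porbit (t * s) x -> connect (gr s t) x y.
Proof.
case/porbitP=> i ->; elim: i => [|i IH]; first by rewrite expg0 perm1 connect0.
apply: (connect_trans IH); rewrite expgSr permM permM.
apply: (@connect_trans _ _ (t (((t * s) ^+ i) x))).
  by apply: connect1; rewrite /gr eqxx ?orbT.
by apply: connect1; rewrite /gr eqxx.
Qed.

Lemma porbit_fix s z : s z = z -> porbit s z = [set z].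
Proof.
move=> sz; apply/setP=> y; rewrite inE; apply/porbitP/eqP=> [[i ->]|->].
  by elim: i => [|i IH]; rewrite ?expg0 ?perm1 // expgSr permM IH.
by exists 0; rewrite expg0 perm1.
Qed.

Lemma porbits1 : #|porbits (1 : {perm T})| = #|T|.
Proof.
rewrite /porbits card_in_imset // => x y _ _.
by rewrite !porbit_fix ?perm1 // => /set1_inj.
Qed.

Definition ncomp s t := n_comp (gr s t) T.

Lemma porbits_le_ncomp s : #|porbits s| <= ncomp s 1.
Proof.
have symg := sym_connect_sym (gr_sym s 1).
rewrite /ncomp /n_comp_mem.
have -> : porbits s = porbit s @: [set x | roots (gr s 1) x].
  apply/setP=> B; apply/imsetP/imsetP=> [[x _ ->]|[x _ ->]]; last by exists x.
  exists (fingraph.root (gr s 1) x); first by rewrite inE /roots fingraph.root_root.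
  apply/eqP; rewrite eq_porbit_mem.
  have := connect_root (gr s 1) x.
  suff H: forall y, connect (gr s 1) x y -> porbit s y = porbit s x.
    by move/H ->; apply: porbit_id.
  apply: connect_ind' => // u v <- /or4P [] /eqP ->; rewrite ?porbitS //.
  by rewrite perm1.  by rewrite perm1.
apply: leq_trans (leq_imset_card _ _) _.
by apply: subset_leq_card; apply/subsetP=> x; rewrite !inE andbT.
Qed.

Lemma ncomp_edge (e e' : rel T) x y : symmetric e -> symmetric e' ->
  (forall u v, e u v -> connect e' u v) ->
  (forall u v, e' u v -> [|| e u v, (u == x) && (v == y) | (u == y) && (v == x)]) ->
  n_comp e T <= n_comp e' T + ~~ connect e x y.
Proof.
move=> syme syme' F1 F2.
have se := sym_connect_sym syme; have se' := sym_connect_sym syme'.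
have tr := @connect_trans _ e.
case cxy: (connect e x y).
  have H : connect e =2 connect e'.
    move=> u v; apply/idP/idP; apply: connect_sub => {}u {}v.
      exact: F1.
    move/F2/or3P=> [/connect1 //|/andP[/eqP-> /eqP->] //|/andP[/eqP-> /eqP->]].
    by rewrite se.
  by rewrite (eq_n_comp H) addn0.
have char u v : connect e' u v ->
    [|| connect e u v, connect e u x && connect e y v | connect e u y && connect e x v].
  apply: (@connect_ind' _ e' (fun v => [|| connect e u v, connect e u x && connect e y v | connect e u y && connect e x v])) => [|v1 v2]; first by rewrite connect0.
  move=> P12 /F2 /or3P [E|/andP[/eqP E1 /eqP E2]|/andP[/eqP E1 /eqP E2]].
  - have c12 := connect1 E.
    case/or3P: P12 => [c|/andP[c1 c2]|/andP[c1 c2]].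
    + by rewrite (tr _ _ _ c c12).
    + by rewrite c1 (tr _ _ _ c2 c12) orbT.
    + by rewrite c1 (tr _ _ _ c2 c12) !orbT.
  - subst v1 v2; case/or3P: P12 => [c|/andP[c1 c2]|/andP[c1 c2]].
    + by rewrite c connect0 orbT.
    + by rewrite (tr _ _ _ c1 (_ : connect e x y)) // -se.
    + by rewrite c1.
  - subst v1 v2; case/or3P: P12 => [c|/andP[c1 c2]|/andP[c1 c2]].
    + by rewrite c connect0 !orbT.
    + by rewrite c1.
    + by rewrite (tr _ _ _ c1 (_ : connect e y x)) // -se.
pose R := [set r | roots e r]; pose R' := [set r | roots e' r].
have -> : n_comp e T = #|R| by apply: eq_card => r; rewrite !inE andbT.
have -> : n_comp e' T = #|R'| by apply: eq_card => r; rewrite !inE andbT.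
pose ry := fingraph.root e y.
rewrite (cardsD1 ry R) addnC; apply: leq_add; last by case: (ry \in R).
rewrite -(@card_in_imset _ _ (fingraph.root e')); last first.
  move=> r1 r2; rewrite !inE => /andP[n1 /eqP R1] /andP[n2 /eqP R2] /(fingraph.rootP se').
  case/char/or3P=> [c|/andP[c1 c2]|/andP[c1 c2]].
  - by rewrite -R1 -R2; apply/(fingraph.rootP se).
  - by move: n2; rewrite /ry -R2 eq_sym (fingraph.root_connect se) c2.
  - by move: n1; rewrite /ry -R1 (fingraph.root_connect se) c1.
apply: subset_leq_card; apply/subsetP=> _ /imsetP[r _ ->].
by rewrite inE /roots fingraph.root_root.
Qed.

Lemma genus_base s : #|porbits s| + #|porbits (1 : {perm T})| + #|porbits (1 * s)|
  <= #|T| + (2 * ncomp s 1)%N.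
Proof. rewrite porbits1 mul1g; have := porbits_le_ncomp s; lia. Qed.

Lemma genus_le s t : t * t = 1 ->
  #|porbits s| + #|porbits t| + #|porbits (t * s)| <= #|T| + (2 * ncomp s t)%N.
Proof.
suff H : forall n t, #|[set z | t z != z]| <= n -> t * t = 1 ->
  #|porbits s| + #|porbits t| + #|porbits (t * s)| <= #|T| + (2 * ncomp s t)%N.
  by move=> tt; apply: (H _ t (leqnn _) tt).
elim=> [|n IH] {}t.
  rewrite leqn0 cards_eq0 => /eqP E _.
  have -> : t = 1.
    apply/permP => z; rewrite perm1; apply/eqP/negPn/negP => tz.
    have : z \in [set z | t z != z] by rewrite inE.
    by rewrite E inE.
  exact: genus_base.
case: (pickP [pred z | t z != z]) => [x /= tx|nfix]; last first.
  move=> _ _; have -> : t = 1.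
    apply/permP => z; rewrite perm1; apply/eqP/negPn.
    by have := nfix z; rewrite /= => ->.
  exact: genus_base.
move=> cardt tt.
have ttz z : t (t z) = z by rewrite -permM tt perm1.
pose y := t x; pose tau := tperm x y; pose t' := tau * t.
have xy : x != y by rewrite eq_sym.
have t'x : t' x = x by rewrite permM tpermL ttz.
have t'y : t' y = y by rewrite permM tpermR.
have t'z z : z != x -> z != y -> t' z = t z.
  by move=> zx zy; rewrite permM tpermD // eq_sym.
have card' : #|[set z | t' z != z]| <= n.
  have sub : [set z | t' z != z] \subset [set z | t z != z] :\ x.
    apply/subsetP=> z; rewrite !inE.
    case: (eqVneq z x) => [->|zx]; first by rewrite t'x eqxx.
    case: (eqVneq z y) => [->|zy]; first by rewrite t'y eqxx.
    by rewrite t'z.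
  have := subset_leq_card sub; rewrite (cardsD1 x [set z | t z != z]) inE tx /= in cardt.
  lia.
have tt' : t' * t' = 1.
  apply/permP => z; rewrite permM perm1.
  case: (eqVneq z x) => [->|zx]; first by rewrite !t'x.
  case: (eqVneq z y) => [->|zy]; first by rewrite !t'y.
  rewrite t'z // t'z ?ttz //.
    by apply: contra_neq zy => E; rewrite /y -E ttz.
  by apply: contra_neq zx => E; apply: (perm_inj (s := t)); rewrite -/y -E.
have tauK : tau * tau = 1 by apply/permP => z; rewrite permM tpermK perm1.
have tE : t = tau * t' by rewrite /t' mulgA tauK mul1g.
have IH' := IH t' card' tt'.
have E1 : #|porbits t| + 2 = #|porbits t'| + 1.
  have := porbits_mul_tperm t' x y.
  by rewrite /= porbit_fix // inE (negbTE xy) /= -tE.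
have E2 : #|porbits (t * s)| + (x \notin porbit (t' * s) y).*2 = #|porbits (t' * s)| + 1.
  have := porbits_mul_tperm (t' * s) x y.
  by rewrite /= -/tau mulgA -tE xy.
have Ecomp : ncomp s t' <= ncomp s t + ~~ connect (gr s t') x y.
  apply: ncomp_edge; try exact: gr_sym.
    move=> u v /or4P [] /eqP E.
    - by apply: connect1; rewrite /gr E eqxx.
    - by apply: connect1; rewrite /gr E eqxx orbT.
    - case: (eqVneq u x) => [ux|nux]; first by rewrite E ux t'x connect0.
      case: (eqVneq u y) => [uy|nuy]; first by rewrite E uy t'y connect0.
      by apply: connect1; rewrite /gr E t'z // eqxx !orbT.
    - case: (eqVneq v x) => [vx|nvx]; first by rewrite E vx t'x connect0.
      case: (eqVneq v y) => [vy|nvy]; first by rewrite E vy t'y connect0.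
      by apply: connect1; rewrite /gr E t'z // eqxx !orbT.
  move=> u v /or4P [] /eqP E.
  - by rewrite /gr E eqxx.
  - by rewrite /gr E eqxx orbT.
  - case: (eqVneq u x) => [ux|nux]; first by rewrite E ux /y !eqxx ?orbT.
    case: (eqVneq u y) => [uy|nuy]; first by rewrite E uy /y ttz !eqxx ?orbT.
    by rewrite /gr E -t'z // eqxx !orbT.
  - case: (eqVneq v x) => [vx|nvx]; first by rewrite E vx /y !eqxx ?orbT.
    case: (eqVneq v y) => [vy|nvy]; first by rewrite E vy /y ttz !eqxx ?orbT.
    by rewrite /gr E -t'z // eqxx !orbT.
have Hd : ~~ connect (gr s t') x y -> x \notin porbit (t' * s) y.
  apply: contra => /porbitM_gr; by rewrite (sym_connect_sym (gr_sym s t')).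
rewrite /ncomp in Ecomp *.
move: Ecomp Hd E1 E2 IH'; rewrite /ncomp.
case: (connect _ x y); case: (x \in porbit _ y) => /= Ec Hd E1 E2 IH2; rewrite -!muln2 in E2; try lia; by have := Hd isT.
Qed.
End Genus.

Section Count.
Variable T : finType.
Local Open Scope group_scope.
Implicit Types s : {perm T}.

Lemma porbit_subset s (S : {set T}) z :
  (forall u, u \in S -> s u \in S) -> z \in S -> porbit s z \subset S.
Proof.
move=> cl zS; apply/subsetP=> y /porbitP [i ->].
by elim: i => [|i IH]; rewrite ?expg0 ?perm1 // expgSr permM cl.
Qed.

Lemma porbit_partition s (S : {set T}) :
  (forall u, u \in S -> s u \in S) -> partition (porbit s @: S) S.
Proof.
move=> cl; apply/and3P; split.
- apply/eqP/setP=> z; apply/bigcupP/idP => [[B /imsetP[u uS ->]]|zS].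
    by apply/subsetP; apply: porbit_subset.
  by exists (porbit s z); [apply: imset_f | apply: porbit_id].
- apply/trivIsetP=> A B /imsetP[u _ ->] /imsetP[v _ ->] neq.
  rewrite -setI_eq0; apply/negPn/negP => /set0Pn [z]; rewrite inE => /andP[zu zv].
  move/eqP: neq; apply.
  have E1 : porbit s z = porbit s u by apply/eqP; rewrite eq_porbit_mem.
  have E2 : porbit s z = porbit s v by apply/eqP; rewrite eq_porbit_mem.
  by rewrite -E1 -E2.
- apply/imsetP=> [[u _ E]].
  by have := porbit_id s u; rewrite -E inE.
Qed.

Lemma porbits_count s (S : {set T}) :
  (forall u, u \in S -> s u \in S) -> (forall u, u \notin S -> s u = u) ->
  #|porbits s| = #|porbit s @: S| + #|~: S|.
Proof.
move=> cl fx.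
have -> : porbits s = porbit s @: S :|: porbit s @: (~: S).
  rewrite /porbits -imsetU setUCr; apply/setP=> B.
  by apply/imsetP/imsetP => [[x _ ->]|[x _ ->]]; exists x.
rewrite cardsU.
have -> : porbit s @: S :&: porbit s @: (~: S) = set0.
  apply/setP=> B; rewrite !inE; apply/negbTE/andP=> [[/imsetP[u uS ->] /imsetP[v vS E]]].
  have := porbit_id s v; rewrite -E => /(subsetP (porbit_subset cl uS)).
  by rewrite inE in vS; move/negP: vS.
rewrite cards0 subn0; congr (_ + _); apply: card_in_imset => u v; rewrite !inE => uS vS.
by rewrite !porbit_fix ?fx // => /set1_inj.
Qed.
End Count.

Lemma porbits_mulr_tperm (T : finType) (s : {perm T}) x y : x != y -> x \in porbit s y ->
  #|porbits (s * tperm x y)%g| = #|porbits s| + 1.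
Proof.
move=> xy xs.
have := porbits_mul_tperm s^-1 x y.
rewrite /= porbitV xs xy /= addn0 porbitsV => <-.
by rewrite -porbitsV invMg tpermV.
Qed.

Lemma conn_step (T : finType) (r : rel T) u z : u != z -> connect r u z -> exists v, r u v.
Proof.
move=> uz /connectP [[|v p] /= pth E]; first by rewrite E eqxx in uz.
by case/andP: pth => ruv _; exists v.
Qed.

Section Graph.
Variables (V : finType) (adj : rel V) (rot : V -> V -> V).
Hypotheses (adj_sym : symmetric adj) (adj_irr : irreflexive adj)
  (rot_nb : forall v u, adj v u -> adj v (rot v u))
  (rot_inj : forall v, {in [pred u | adj v u] &, injective (rot v)})
  (rot_cyc : forall v u w, adj v u -> adj v w -> fconnect (rot v) u w).
Local Open Scope group_scope.

Definition sig_f (d : V * V) := if adj d.1 d.2 then (d.1, rot d.1 d.2) else d.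
Definition eps_f (d : V * V) := if adj d.1 d.2 then (d.2, d.1) else d.

Lemma sig_inj : injective sig_f.
Proof.
move=> [a b] [c e]; rewrite /sig_f /=.
case: ifP => ab; case: ifP => ce.
- by case=> ac; subst c => /(rot_inj ab ce) ->.
- by case=> ac E; subst c e; rewrite (rot_nb ab) in ce.
- by case=> ac E; subst a b; rewrite (rot_nb ce) in ab.
- by [].
Qed.

Lemma eps_invol : involutive eps_f.
Proof.
move=> [a b]; rewrite /eps_f /=; case ab: (adj a b) => /=; last by rewrite ab.
by rewrite adj_sym ab.
Qed.

Definition sig : {perm V * V} := perm sig_inj.
Definition eps : {perm V * V} := perm (inv_inj eps_invol).
Definition Phi : {perm V * V} := eps * sig.

Lemma sigE z : sig z = sig_f z. Proof. exact: permE. Qed.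
Lemma epsE z : eps z = eps_f z. Proof. exact: permE. Qed.
Lemma PhiE z : Phi z = sig_f (eps_f z). Proof. by rewrite permM sigE epsE. Qed.

Lemma sig_fst z : (sig z).1 = z.1.
Proof. by rewrite sigE /sig_f; case: ifP. Qed.

Lemma dart_sig z : adj (sig z).1 (sig z).2 = adj z.1 z.2.
Proof. by rewrite sigE /sig_f; case: ifP => //= /rot_nb ->. Qed.

Lemma dart_eps z : adj (eps z).1 (eps z).2 = adj z.1 z.2.
Proof. by rewrite epsE /eps_f; case: ifP => //= ?; rewrite adj_sym. Qed.

Lemma dart_Phi z : adj (Phi z).1 (Phi z).2 = adj z.1 z.2.
Proof. by rewrite permM dart_sig dart_eps. Qed.

Lemma sig_fix z : ~~ adj z.1 z.2 -> sig z = z.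
Proof. by rewrite sigE /sig_f => /negbTE ->. Qed.
Lemma eps_fix z : ~~ adj z.1 z.2 -> eps z = z.
Proof. by rewrite epsE /eps_f => /negbTE ->. Qed.
Lemma Phi_fix z : ~~ adj z.1 z.2 -> Phi z = z.
Proof. by move=> nz; rewrite permM eps_fix // sig_fix. Qed.

Lemma Phi_fnext d : adj d.1 d.2 -> Phi d = fnext rot d.
Proof. by move=> dd; rewrite PhiE /eps_f dd /sig_f /= adj_sym dd. Qed.

Lemma darts_cl (s : {perm V * V}) : (forall z, adj (s z).1 (s z).2 = adj z.1 z.2) ->
  forall u, u \in darts adj -> s u \in darts adj.
Proof. by move=> H u; rewrite !inE H. Qed.

Lemma face_porbit d : adj d.1 d.2 -> face_of rot d = porbit Phi d.
Proof.
move=> dd; apply/setP => y; rewrite inE; apply/idP/idP.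
  have: (d \in porbit Phi d) && adj d.1 d.2 by rewrite porbit_id.
  move=> H c; suff: (y \in porbit Phi d) && adj y.1 y.2 by case/andP.
  apply: (@connect_ind' _ _ (fun y => (y \in porbit Phi d) && adj y.1 y.2) _ H _ _ c).
  move=> u v /andP[ud du] /eqP <-; rewrite -Phi_fnext // dart_Phi du andbT.
  have E : porbit Phi u = porbit Phi d by apply/eqP; rewrite eq_porbit_mem.
  by rewrite -E -(porbitS Phi u) porbit_id.
case/porbitP => i ->; suff: fconnect (fnext rot) d ((Phi ^+ i) d) && adj ((Phi ^+ i) d).1 ((Phi ^+ i) d).2.
  by case/andP.
elim: i => [|i /andP[c di]]; first by rewrite expg0 perm1 connect0.
rewrite expgSr permM dart_Phi di andbT Phi_fnext //.
by apply: connect_trans c (fconnect1 _ _).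
Qed.

Lemma faces_porbit : faces adj rot = porbit Phi @: darts adj.
Proof. by apply: eq_in_imset => d; rewrite inE => /face_porbit. Qed.

Lemma eps_porbit d : adj d.1 d.2 -> porbit eps d = [set d; eps d].
Proof.
move=> dd; apply/setP => y; rewrite !inE; apply/idP/idP.
  case/porbitP => i ->; elim: i => [|i IH]; first by rewrite expg0 perm1 eqxx.
  rewrite expgSr permM; case/orP: IH => /eqP ->; first by rewrite eqxx orbT.
  by rewrite !epsE eps_invol eqxx.
case/orP => /eqP ->; first exact: porbit_id.
by have := mem_porbit eps 1 d; rewrite expg1.
Qed.

Lemma darts_even : #|darts adj| = (#|porbit eps @: darts adj| * 2)%N.
Proof.
apply: card_uniform_partition; last by apply: porbit_partition; apply: darts_cl dart_eps.
move=> _ /imsetP[d dd ->]; rewrite inE in dd.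
rewrite eps_porbit // cards2 epsE /eps_f dd; case: d dd => a b /= ab.
by rewrite xpair_eqE andbC; case: eqP => // E; rewrite E adj_irr in ab.
Qed.


Lemma iter_fst (s : {perm V * V}) (H : forall z, (s z).1 = z.1) i z : ((s ^+ i) z).1 = z.1.
Proof. by elim: i => [|i IH]; rewrite ?expg0 ?perm1 // expgSr permM H. Qed.

Lemma sig_iter u v n : adj u v ->
  iter n sig (u, v) = (u, iter n (rot u) v) /\ adj u (iter n (rot u) v).
Proof.
move=> uv; elim: n => [|n [IH1 IH2]] //=.
by rewrite IH1 sigE /sig_f /= IH2 (rot_nb IH2).
Qed.

Lemma csig (hnb : forall v, exists u, adj v u) : #|V| <= #|porbit sig @: darts adj|.
Proof.
pose f v := porbit sig (v, xchoose (hnb v)).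
have finj : injective f.
  move=> v1 v2 E.
  have : (v1, xchoose (hnb v1)) \in f v2 by rewrite -E porbit_id.
  by case/porbitP => i /(f_equal fst) /=; rewrite iter_fst //; apply: sig_fst.
have := card_imset [set: V] finj; rewrite cardsT => <-.
apply: subset_leq_card; apply/subsetP=> _ /imsetP[v _ ->].
by apply: imset_f; rewrite inE /=; apply: xchooseP.
Qed.

Lemma ncomp_split (hV : 2 < #|V|)
  (h2 : forall x u v, u != x -> v != x -> connect [rel y z | [&& adj y z, y != x & z != x]] u v)
  (d1 d2 : V * V) : d2.1 = d1.1 ->
  ncomp (sig * tperm d1 d2) eps <= #|~: darts adj| + 1.
Proof.
move=> e21; set w := d1.1; set s' := sig * tperm d1 d2; set e := gr s' eps.
have s'E z : z.1 != w -> s' z = sig z.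
  move=> zw; rewrite permM tpermD //.
    by apply: contra_neq zw => E; rewrite -(sig_fst z) -E.
  by apply: contra_neq zw => E; rewrite -(sig_fst z) -E e21.
have vert u v v' : u != w -> adj u v -> adj u v' -> connect e (u, v) (u, v').
  move=> uw uv uv'; have c := rot_cyc uv uv'.
  rewrite -(iter_findex c).
  elim: (findex _ v v') => [|k IH]; first exact: connect0.
  apply: (connect_trans IH); apply: connect1.
  have [E1 E2] := sig_iter k uv.
  by rewrite /e /gr s'E //= sigE /sig_f /= E2 eqxx.
have epsc u v : adj u v -> connect e (u, v) (v, u).
  by move=> uv; apply: connect1; rewrite /e /gr epsE /eps_f /= uv eqxx !orbT.
have [u0 [z0 [u0w z0w u0z0]]] : exists u0 z0, [/\ u0 \in [set~ w], z0 \in [set~ w] & u0 != z0].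
  by apply/card_gt1P; rewrite cardsC1; lia.
rewrite !inE in u0w z0w.
have [v0 /and3P [u0v0 _ v0w]] := conn_step u0z0 (h2 w u0 z0 u0w z0w).
pose ds := (u0, v0).
have P u : u != w -> forall v, adj u v -> connect e (u, v) ds.
  move=> uw; have c := h2 w u0 u u0w uw.
  apply: (@connect_ind' _ _ (fun u => forall v, adj u v -> connect e (u, v) ds) _ _ _ _ c).
    by move=> v uv; apply: vert.
  move=> a a' Pa /and3P [aa' aw a'w] v a'v.
  apply: (connect_trans (vert _ _ _ a'w a'v (_ : adj a' a))); first by rewrite adj_sym.
  apply: (connect_trans (epsc _ _ _)); first by rewrite adj_sym.
  exact: Pa.
have Pd d : adj d.1 d.2 -> connect e d ds.
  case: d => a b /= ab; case: (eqVneq a w) => [aw|aw]; last exact: (P a aw b ab).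
  have bw : b != w by rewrite -aw; apply: contraTneq ab => ->; rewrite adj_irr.
  apply: (connect_trans (epsc _ _ ab)); apply: (P b bw a); by rewrite adj_sym.
have se : connect_sym e by apply: sym_connect_sym; apply: gr_sym.
apply: (@leq_trans #|~: darts adj :|: [set fingraph.root e ds]|); last first.
  by have := (leq_card_setU (~: darts adj) [set fingraph.root e ds]).1; rewrite cards1.
apply: subset_leq_card; apply/subsetP=> r; rewrite !inE andbT => /eqP rr.
case dr: (adj r.1 r.2); last by [].
by rewrite -rr; apply/orP; right; apply/eqP/(fingraph.rootP se); apply: Pd.
Qed.

Lemma face_simple (hV : 2 < #|V|) (hnb : forall v, exists u, adj v u)
  (h2 : forall x u v, u != x -> v != x -> connect [rel y z | [&& adj y z, y != x & z != x]] u v)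
  (heul : #|V| + #|faces adj rot| = #|darts adj| %/ 2 + 2)
  (pinf : {set V * V}) (hp : pinf \in faces adj rot) :
  forall d1 d2, d1 \in pinf -> d2 \in pinf -> d1.1 = d2.1 -> d1 = d2.
Proof.
move=> d1 d2 h1 h2' e12; apply/eqP/negPn/negP => n12.
have clP := darts_cl dart_Phi; have clS := darts_cl dart_sig; have clE := darts_cl dart_eps.
move: hp; rewrite faces_porbit => /imsetP [d0 dd0 pE].
have dd1 : d1 \in darts adj by apply: (subsetP (porbit_subset clP dd0)); rewrite -pE.
have dd2 : d2 \in darts adj by apply: (subsetP (porbit_subset clP dd0)); rewrite -pE.
have sigorb : d1 \in porbit sig d2.
  rewrite inE in dd1 dd2; case: d1 d2 dd1 dd2 {h1 h2' n12} e12 => a b [c d] /= ab cd ac.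
  subst c; rewrite inE /= in cd; have cc := rot_cyc cd ab.
  apply/porbitP; exists (findex (rot a) d b); rewrite permX.
  by have [-> _] := sig_iter (findex (rot a) d b) cd; rewrite iter_findex.
have phiorb : d1 \in porbit Phi d2.
  have E : porbit Phi d2 = porbit Phi d0 by apply/eqP; rewrite eq_porbit_mem -pE.
  by rewrite E -pE.
have ee : eps * eps = 1 by apply/permP => z; rewrite permM !epsE eps_invol perm1.
have G : #|porbits (sig * tperm d1 d2)| + #|porbits eps| + #|porbits (eps * (sig * tperm d1 d2))|
   <= #|{: V * V}| + (2 * ncomp (sig * tperm d1 d2) eps)%N := genus_le _ ee.
rewrite porbits_mulr_tperm // mulgA -/Phi porbits_mulr_tperm // in G.
have : ncomp (sig * tperm d1 d2) eps <= #|~: darts adj| + 1 := ncomp_split hV h2 (esym e12).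
have fx (s : {perm V * V}) : (forall z, ~~ adj z.1 z.2 -> s z = z) ->
     forall u, u \notin darts adj -> s u = u.
  by move=> H u; rewrite inE; apply: H.
rewrite (porbits_count clS (fx _ sig_fix)) (porbits_count clE (fx _ eps_fix))
        (porbits_count clP (fx _ Phi_fix)) -faces_porbit in G.
have : #|darts adj| + #|~: darts adj| = #|{: V * V}| := cardsC (darts adj); have := darts_even; have := csig hnb.
move: G heul. set K := ncomp _ _. set D := #|darts adj|. set N := #|~: darts adj|. set TT := #|{: V * V}|. set S1 := #|[set porbit sig x | x in darts adj]|. set S2 := #|[set porbit eps x | x in darts adj]|. set F := #|faces adj rot|. lia.
Qed.
End Graph.

Lemma face_closed (V : finType) (adj : rel V) (rot : V -> V -> V) p d :
  p \in faces adj rot -> d \in p -> fnext rot d \in p.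
Proof.
case/imsetP=> d0 _ -> ; rewrite !inE => c.
by apply: connect_trans c (fconnect1 _ _).
Qed.

Local Open Scope ring_scope.

Lemma bface_le (V : finType) (b : V -> int) (p : {set V * V}) v :
  v \in face_vertices p -> bface b p <= b v.
Proof.
move=> vp; rewrite /bface; case: pickP => [v0 _|none]; last by rewrite none in vp.
by rewrite (bigD1 v) //= ge_min lexx.
Qed.

Section Main.
Variables (V : finType) (adj : rel V) (rot : V -> V -> V)
  (pinf : {set V * V}) (a : {set V * V} -> int) (b : V -> int).
Hypothesis H3 : forall p, p \in bounded_faces adj rot pinf -> forall d, d \in p ->
     (b d.1 - bface b p) * (b d.2 - bface b p) = 0.

Definition goodv u v := [&& 1 <= b u, 1 <= b v & (b u == 1) || (b v == 1)].

Lemma goodv_sym u v : goodv u v = goodv v u.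
Proof.
by rewrite /goodv; case: (1 <= b u); case: (1 <= b v); case: (b u == 1); case: (b v == 1).
Qed.

Lemma face_good p d : p \in bounded_faces adj rot pinf -> d \in p -> goodv d.1 d.2 ->
  bface b p = 1 /\ forall e, e \in p -> goodv e.1 e.2.
Proof.
move=> pb dp gd.
have pf : p \in faces adj rot by move: pb; rewrite inE => /andP[].
have fv1 e : e \in p -> e.1 \in face_vertices p by move=> ep; apply: imset_f.
have fv2 e : e \in p -> e.2 \in face_vertices p.
  by move=> ep; have := imset_f fst (face_closed pf ep).
have mE e : e \in p -> bface b p = b e.1 \/ bface b p = b e.2.
  move=> ep; move/eqP: (H3 pb ep); rewrite mulf_eq0 !subr_eq0.
  by case/orP => /eqP ->; [left|right].
have m1 : bface b p = 1.
  have l1 := bface_le b (fv1 _ dp); have l2 := bface_le b (fv2 _ dp).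
  move: gd; rewrite /goodv => /and3P [g1 g2 /orP [/eqP g3|/eqP g3]];
    case: (mE _ dp) => E; lia.
split=> // e ep.
have l1 := bface_le b (fv1 _ ep); have l2 := bface_le b (fv2 _ ep).
rewrite m1 in l1 l2; rewrite /goodv l1 l2 /=.
by case: (mE _ ep) => E; rewrite m1 in E; rewrite -E eqxx ?orbT.
Qed.


Hypotheses (adj_sym : symmetric adj)
  (rot_nb : forall v u, adj v u -> adj v (rot v u))
  (rot_inj : forall v, {in [pred u | adj v u] &, injective (rot v)})
  (rot_cyc : forall v u w, adj v u -> adj v w -> fconnect (rot v) u w)
  (hnb : forall v, exists u, adj v u)
  (hp : pinf \in faces adj rot)
  (fs : forall d1 d2, d1 \in pinf -> d2 \in pinf -> d1.1 = d2.1 -> d1 = d2).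

Lemma step_good w x : adj w x -> (x, w) \notin pinf ->
  goodv x w = goodv w (rot w x).
Proof.
move=> wx nb; set q := face_of rot (x, w).
have qf : q \in faces adj rot by apply: imset_f; rewrite inE /= adj_sym.
have xq : (x, w) \in q by rewrite inE connect0.
have qb : q \in bounded_faces adj rot pinf.
  rewrite !inE qf andbT; apply: (contraNneq _ nb) => E; rewrite -E; exact: xq.
have nq : (w, rot w x) \in q by apply: (face_closed qf xq).
apply/idP/idP => g.
  by have [_ /(_ _ nq)] := face_good qb xq g.
by have [_ /(_ _ xq)] := face_good qb nq g.
Qed.

Lemma vert_const w u u' : adj w u -> adj w u' -> goodv w u = goodv w u'.
Proof.
have [u0 [wu0 Hu0]] : exists u0, adj w u0 /\
    forall z, adj w z -> z != u0 -> (z, w) \notin pinf.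
  case: (pickP [pred z | adj w z && ((z, w) \in pinf)]) => [z /andP[wz bz]|nb].
    exists z; split=> // z' wz' nz; apply: contra nz => bz'; apply/eqP.
    have E := fs (face_closed hp bz') (face_closed hp bz) erefl.
    case: E => /(rot_inj wz' wz).
    by apply.
  have [y wy] := hnb w; exists y; split=> // z wz _.
  by have := nb z; rewrite /= wz => /negbT.
set s := rot w u0.
suff H y : adj w y -> goodv w y = goodv w s by move=> /H -> /H ->.
move=> wy; have c := rot_cyc (rot_nb wu0) wy.
have ex : exists n, iter n (rot w) s == y by exists (findex (rot w) s y); rewrite iter_findex.
case: (ex_minnP ex) => n /eqP En Hmin.
have adjk k : adj w (iter k (rot w) s) by elim: k => [|k IH] /=; [apply: rot_nb | apply: rot_nb].
suff: forall k, (k <= n)%N -> goodv w (iter k (rot w) s) = goodv w s by move/(_ n (leqnn n)); rewrite En.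
elim=> [|k IH] // lkn.
have nk : iter k (rot w) s != u0.
  apply/negP => /eqP E.
  have E2 : iter (n - k.+1)%N (rot w) s = y.
    by rewrite -En -{2}(subnK lkn) iterD /= E.
  have := Hmin (n - k.+1)%N; rewrite E2 eqxx => /(_ isT) H; move: H lkn; clear; lia.
rewrite -IH ?(ltnW lkn) //= -step_good.
- exact: goodv_sym.
- exact: adjk.
- exact: Hu0.
Qed.

End Main.
Unset Implicit Arguments.

Theorem lemma4p1 (V : finType) (adj : rel V) (rot : V -> V -> V)
  (pinf : {set V * V}) (a : {set V * V} -> int) (b : V -> int) :
  plane_graph adj rot pinf ->
  admissible adj rot pinf a b ->
  (exists d, d \in pinf /\ b d.1 = 1 /\ b d.2 = 1) ->
  (forall p, p \in bounded_faces adj rot pinf -> a p + bface b p = 0) ->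
  (forall p, p \in bounded_faces adj rot pinf -> forall d, d \in p ->
     (b d.1 - bface b p) * (b d.2 - bface b p) = 0) ->
  (forall w, 1 <= b w)
  /\ (forall p, p \in bounded_faces adj rot pinf -> a p = -1)
  /\ 2 + (#|face_vertices pinf|)%:Z <= Bval adj rot pinf a b.
Proof.
move=> [[asym airr rnb rinj rcyc] [hV hconn h2] heul hp] _ [ds [dsp [b1 b2]]] H2 H3.
have hnb : forall v, exists u, adj v u.
  move=> v; have [z vz] : exists z, z != v.
    have : (0 < #|[set~ v]|)%N by rewrite cardsC1; lia.
    by case/card_gt0P => z; rewrite !inE => zv; exists z.
  by apply: (conn_step _ (hconn v z)); rewrite eq_sym.
have fs := face_simple asym airr rnb rinj rcyc hV hnb h2 heul hp.
have clP := darts_cl (dart_Phi asym rnb rinj).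
have pdart : forall p d, p \in faces adj rot -> d \in p -> adj d.1 d.2.
  move=> p d; rewrite (faces_porbit asym rnb rinj) => /imsetP[d0 dd0 ->] dp.
  by have := subsetP (porbit_subset clP dd0) d dp; rewrite inE.
have vc := vert_const H3 asym rnb rinj rcyc hnb hp fs.
have allg : forall w v, adj w v -> goodv b w v.
  have dsa : adj ds.1 ds.2 := pdart _ _ hp dsp.
  have g0 : goodv b ds.1 ds.2 by rewrite /goodv b1 b2 lexx eqxx.
  have all0 : forall v, adj ds.1 v -> goodv b ds.1 v by move=> v dv; rewrite (vc _ _ _ dv dsa).
  move=> w; have c := hconn ds.1 w.
  apply: (@connect_ind' _ _ (fun u => forall v, adj u v -> goodv b u v) _ all0 _ _ c).
  move=> u u' Pu uu' v u'v.
  have u'u : adj u' u by rewrite asym.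
  by rewrite (vc _ _ _ u'v u'u) goodv_sym Pu.
have bw : forall w, 1 <= b w.
  by move=> w; have [u wu] := hnb w; have /and3P[] := allg _ _ wu.
have ap : forall p, p \in bounded_faces adj rot pinf -> a p = -1.
  move=> p pb; have pf : p \in faces adj rot by move: pb; rewrite inE => /andP[].
  case/imsetP: (pf) => d0 dd0 pE.
  have d0p : d0 \in p by rewrite pE inE connect0.
  rewrite inE in dd0.
  have [m1 _] := face_good H3 pb d0p (allg _ _ dd0).
  by have := H2 p pb; rewrite m1; lia.
split => //; split => //.
rewrite /Bval.
rewrite (eq_bigr (fun p => 2 - (face_length p)%:Z)); last first.
  by move=> p pb; rewrite ap // mulrN1 opprB.
rewrite sumrB sumr_const.
have -> : \sum_(p in bounded_faces adj rot pinf) ((face_length p)%:Z) =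
          (\sum_(p in bounded_faces adj rot pinf) face_length p)%N%:Z.
  by rewrite -natz natr_sum; apply: eq_bigr => p _; rewrite natz.
have sb : (#|V|)%:Z <= \sum_(v : V) b v.
  have : \sum_(v : V) (1 : int) <= \sum_(v : V) b v by apply: ler_sum => v _; exact: bw.
  by rewrite sumr_const natz.
have n1 : (\sum_(p in bounded_faces adj rot pinf) face_length p <=
           \sum_(p in bounded_faces adj rot pinf) #|p|)%N.
  by apply: leq_sum => p _; apply: leq_imset_card.
have n2 : #|darts adj| = (#|pinf| + \sum_(p in bounded_faces adj rot pinf) #|p|)%N.
  have P := porbit_partition clP; rewrite -(faces_porbit asym rnb rinj) in P.
  by rewrite (card_partition P) (big_setD1 _ hp).
have n3 : #|faces adj rot| = (#|bounded_faces adj rot pinf| + 1)%N.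
  by rewrite (cardsD1 pinf) hp addnC.
have n4 : (#|face_vertices pinf| <= #|pinf|)%N by apply: leq_imset_card.
have n5 := darts_even asym airr.
move: heul; rewrite /genus0 => heul.
have -> : (2:int) *+ #|bounded_faces adj rot pinf| = (#|bounded_faces adj rot pinf|)%:Z * 2.
  by rewrite pmulrn mulrzz; lia.
move: sb n1 n2 n3 n4 n5 heul.
set S1 := (\sum_(p in bounded_faces adj rot pinf) face_length p)%N.
set S2 := (\sum_(p in bounded_faces adj rot pinf) #|p|)%N.
set S3 := \sum_(v : V) b v.
lia.
Qed.
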